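(* Let $\alpha\in(0,1)$, let $N\ge1$ and $M>1+\frac{N}{\alpha}$ be integers, and let $\{\mathcal U_1,\dots,\mathcal U_M\}$ be a $(\Gamma,\Delta)$ set system over $[N]$. Then $$\frac{\Delta}{\Gamma}\ge(1-\alpha)\,h_2^{-1}\!\left(\frac{\log_2 M}{N}\right).$$
   Context: For integers $N,M\ge1$ and $\Delta<\Gamma<N$, a $(\Gamma,\Delta)$ set system over $[N]=\{1,\dots,N\}$ is a collection $\{\mathcal U_1,\dots,\mathcal U_M\}$ of $M$ distinct subsets of $[N]$, each of size $\Gamma$, with $\Delta=\max_{i\ne j}|\mathcal U_i\cap\mathcal U_j|$. $h_2(p)=-p\log_2p-(1-p)\log_2(1-p)$ is the binary entropy function and $h_2^{-1}:[0,1]\to[0,1/2]$ is the inverse of its restriction to $[0,1/2]$. *)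

(* Defs.v *)
From Stdlib Require Import Reals ClassicalEpsilon.
From mathcomp Require Import all_boot.

Set Implicit Arguments.
Unset Strict Implicit.
Unset Printing Implicit Defensive.

Open Scope R_scope.

Definition log2 (x : R) : R := ln x / ln 2.

Definition xlog2x (p : R) : R := if Req_EM_T p 0 then 0 else p * log2 p.

Definition h2 (p : R) : R := - xlog2x p - xlog2x (1 - p).

(* inverse of the restriction of h2 to [0,1/2]: the (unique) p in [0,1/2]
   with h2 p = y (meaningful for y in [0,1]) *)
Definition h2inv (y : R) : R :=
  epsilon (inhabits 0) (fun p => 0 <= p <= 1/2 /\ h2 p = y).

Close Scope R_scope.

Definition set_system (N M Gamma Delta : nat) (U : 'I_M -> {set 'I_N}) : Prop :=
  injective U /\
  (forall i, #|U i| = Gamma) /\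
  Delta = \max_(ij : 'I_M * 'I_M | ij.1 != ij.2) #|U ij.1 :&: U ij.2|.

(* Main.v *)
Require Import Defs.
From Stdlib Require Import Reals.
From mathcomp Require Import all_boot.
From Stdlib Require Import Lra Lia ClassicalEpsilon.
From mathcomp Require Import zify.
Lemma dummy_ : True. Proof. by []. Qed.

Lemma cs_nat n (f : 'I_n -> nat) : (\sum_x f x)^2 <= n * \sum_x (f x)^2.
Proof.
have E1 : (\sum_x f x)^2 = \sum_x \sum_y f x * f y.
  by rewrite expnS expn1 big_distrlr.
have E2 : \sum_x \sum_y (f x ^2 + f y ^2) = 2 * (n * \sum_x (f x)^2).
  rewrite (eq_bigr (fun x => n * f x ^2 + \sum_y f y ^2)); last first.
    move=> x _; rewrite big_split /= sum_nat_const card_ord //.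
  rewrite big_split /= sum_nat_const card_ord -big_distrr /= mul2n -addnn; congr (_ + _); apply: eq_bigr.
have L : 2 * \sum_x \sum_y (f x * f y) <= \sum_x \sum_y (f x ^2 + f y ^2).
  rewrite big_distrr /=; apply: leq_sum => x _; rewrite big_distrr /=; apply: leq_sum => y _.
  case: (nat_AGM2 (f x) (f y)) => H _; rewrite sqrnD in H; lia.
rewrite E1; lia.
Qed.

Lemma count_bound N M Gamma Delta (U : 'I_M -> {set 'I_N}) :
  set_system Gamma Delta U -> M * Gamma^2 <= N * (Gamma + (M-1)*Delta).
Proof.
case=> inj [hc hD].
pose d := fun x : 'I_N => \sum_(i < M) (x \in U i : nat).
have cardE (A : {set 'I_N}) : \sum_x (x \in A : nat) = #|A|.
  rewrite -sum1_card [RHS]big_mkcond /=; apply: eq_bigr => x _; by case: (x \in A).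
have S1 : \sum_x d x = M * Gamma.
  rewrite /d exchange_big /= (eq_bigr (fun _ => Gamma)).
    by rewrite sum_nat_const card_ord.
  by move=> i _; rewrite cardE hc.
have S2 : \sum_x (d x)^2 = \sum_i \sum_j #|U i :&: U j|.
  rewrite (eq_bigr (fun x => \sum_i \sum_j ((x \in U i) * (x \in U j)))); last first.
    by move=> x _; rewrite expnS expn1 /d big_distrlr.
  rewrite exchange_big /=; apply: eq_bigr => i _.
  rewrite exchange_big /=; apply: eq_bigr => j _.
  rewrite -cardE; apply: eq_bigr => x _; rewrite inE.
  by case: (x \in U i); case: (x \in U j).
have S3 : \sum_x (d x)^2 <= M * (Gamma + (M-1)*Delta).
  rewrite S2 -[M in M * _]card_ord -sum_nat_const; apply: leq_sum => i _.
  rewrite (bigD1 i) //= setIid hc leq_add2l.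
  have -> : M - 1 = #|[pred j | j != i]| by rewrite cardC1 card_ord; lia.
  rewrite -sum_nat_const; apply: leq_sum => j hj.
  rewrite hD; apply: (leq_bigmax_cond (F := fun ij : 'I_M * 'I_M => #|U ij.1 :&: U ij.2|) (i, j)).
  by rewrite /= eq_sym.
have H := @cs_nat N d; rewrite S1 in H.
case: (posnP M) => [->|M0]; first by rewrite mul0n.
have E : (M*Gamma)^2 = M * (M * Gamma^2) by rewrite expnMn mulnA.
rewrite -(leq_pmul2l M0) -E; apply: (leq_trans H).
by rewrite mulnCA leq_mul2l S3 orbT.
Qed.

Lemma M_le_bin N M Gamma Delta (U : 'I_M -> {set 'I_N}) :
  set_system Gamma Delta U -> M <= 'C(N, Gamma).
Proof.
case=> inj [hc _].
rewrite -[in X in _ <= X](card_ord N) -card_draws.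
have -> : M = #|U @: [set: 'I_M]| by rewrite card_imset // cardsT card_ord.
apply: subset_leq_card; apply/subsetP => A /imsetP [i _ ->].
by rewrite inE hc.
Qed.

Lemma bin_lt N Gamma : 0 < Gamma -> 'C(N, Gamma) < 2 ^ N.
Proof.
move=> G0.
rewrite -{1}(card_ord N) -card_draws.
have -> : 2 ^ N = #|powerset [set: 'I_N]| by rewrite card_powerset cardsT card_ord.
apply: proper_card; apply/properP; split.
  by apply/subsetP => A _; rewrite powersetE subsetT.
exists set0; first by rewrite powersetE sub0set.
by rewrite inE cards0 eq_sym -lt0n G0.
Qed.
Lemma fact_eq n : Factorial.fact n = n`!.
Proof. elim: n => [//|n IH]; rewrite factS -IH; reflexivity. Qed.

Local Open Scope R_scope.

Lemma binC n k : (k <= n)%nat -> INR 'C(n, k) = C n k.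
Proof.
move=> kn; rewrite /C !fact_eq.
have := bin_fact kn => /(f_equal INR); rewrite !mult_INR => <-.
have h1 : INR k`! <> 0 by apply: not_0_INR; have := fact_gt0 k; lia.
have h2 : INR (n - k)`! <> 0 by apply: not_0_INR; have := fact_gt0 (n-k); lia.
change (n - k)%coq_nat with (n - k)%N; field; lra.
Qed.

Lemma term_le_sum (f : nat -> R) n k : (forall i, 0 <= f i) -> (k <= n)%nat ->
  f k <= sum_f_R0 f n.
Proof.
move=> H; elim: n => [|n IH] kn.
  have -> : k = 0%nat by lia.
  simpl; lra.
have [->|kn'] : (k = n.+1 \/ k <= n)%nat by lia.
  have : 0 <= sum_f_R0 f n by apply: cond_pos_sum.
  simpl; lra.
have := IH kn'; have := H n.+1; simpl; lra.
Qed.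

Lemma C_nonneg n i : 0 <= C n i.
Proof.
rewrite /C; apply: Rmult_le_pos; first by apply: pos_INR.
apply: Rlt_le; apply: Rinv_0_lt_compat; apply: Rmult_lt_0_compat;
  apply: lt_0_INR; apply: Factorial.lt_O_fact.
Qed.

Lemma bin_bound n k q : 0 < q < 1 -> (k <= n)%nat ->
  C n k * q ^ k * (1 - q) ^ (n - k) <= 1.
Proof.
move=> hq kn.
have E := Binomial.binomial q (1 - q) n.
have E1 : q + (1 - q) = 1 by ring.
rewrite E1 pow1 in E.
apply: (Rle_trans _ (sum_f_R0 (fun i => C n i * q ^ i * (1 - q) ^ (n - i)%coq_nat) n)); last by rewrite -E; lra.
apply: (@term_le_sum (fun i => C n i * q ^ i * (1 - q) ^ (n - i)%coq_nat) n k) => // i.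
apply: Rmult_le_pos; first apply: Rmult_le_pos; first exact: C_nonneg.
  by apply: pow_le; lra.
by apply: pow_le; lra.
Qed.

Lemma ln_le0 x : 0 < x -> x <= 1 -> ln x <= 0.
Proof.
move=> h0 h1; case: (Rle_lt_or_eq_dec _ _ h1) => [h|->]; last by rewrite ln_1; lra.
by have := ln_increasing _ _ h0 h; rewrite ln_1; lra.
Qed.

Lemma ln_bound (M N G : nat) q : 0 < q < 1 -> (G <= N)%nat -> (0 < M)%nat ->
  INR M <= C N G ->
  ln (INR M) + INR G * ln q + INR (N - G) * ln (1 - q) <= 0.
Proof.
move=> hq GN M0 hM.
have hM0 : 0 < INR M by apply: lt_0_INR; apply/ltP.
have p1 : 0 < q ^ G by apply: pow_lt; lra.
have p2 : 0 < (1 - q) ^ (N - G) by apply: pow_lt; lra.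
have hb := @bin_bound N G q hq GN.
have hb' : INR M * q ^ G * (1 - q) ^ (N - G) <= 1.
  apply: Rle_trans hb; apply: Rmult_le_compat_r; first lra.
  apply: Rmult_le_compat_r; lra.
have hpos : 0 < INR M * q ^ G * (1 - q) ^ (N - G).
  apply: Rmult_lt_0_compat; [apply: Rmult_lt_0_compat|]; lra.
have := @ln_le0 _ hpos hb'.
rewrite !ln_mult; try (apply: Rmult_lt_0_compat); try lra.
rewrite !ln_pow; lra.
Qed.

Definition g (p : R) : R := - (p * ln p + (1 - p) * ln (1 - p)).

Lemma ln2_pos : 0 < ln 2.
Proof. have := ln_lt_2; lra. Qed.

Lemma h2_g p : 0 < p < 1 -> h2 p * ln 2 = g p.
Proof.
move=> hp; have := ln2_pos => l2.
rewrite /h2 /xlog2x /log2 /g.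
destruct (Req_EM_T p 0) as [?|Hne]; first lra.
destruct (Req_EM_T (1 - p) 0) as [?|Hne2]; first lra.
simpl; field; lra.
Qed.

Lemma h2_0 : h2 0 = 0.
Proof.
rewrite /h2 /xlog2x /log2.
destruct (Req_EM_T 0 0) as [He|?]; last lra.
destruct (Req_EM_T (1 - 0) 0) as [?|Hne2]; first lra.
simpl. replace (1 - 0) with 1 by ring. rewrite ln_1; lra.
Qed.

Lemma g_half : g (1/2) = ln 2.
Proof.
rewrite /g.
have -> : 1 - 1/2 = / 2 by field.
have -> : 1/2 = / 2 by field.
rewrite ln_Rinv; lra.
Qed.

Lemma ln_cont x : 0 < x -> continuity_pt ln x.
Proof. move=> hx; apply: derivable_continuous_pt; exists (/ x); exact: derivable_pt_lim_ln. Qed.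

Definition omx (x : R) : R := 1 - x.
Definition lomx (x : R) : R := ln (1 - x).

Lemma g_cont p : 0 < p < 1 -> continuity_pt g p.
Proof.
move=> hp.
have cid : continuity_pt id p by apply: derivable_continuous_pt; apply: derivable_pt_id.
have c1 : continuity_pt omx p.
  change (continuity_pt (fct_cte 1 - id)%F p).
  apply: continuity_pt_minus => //; apply: continuity_pt_const; by move=> ? ?.
have c2 : continuity_pt lomx p.
  change (continuity_pt (comp ln omx) p).
  apply: continuity_pt_comp => //; apply: ln_cont; rewrite /omx; lra.
change (continuity_pt (- (id * ln + omx * lomx))%F p).
apply: continuity_pt_opp; apply: continuity_pt_plus; apply: continuity_pt_mult => //.
apply: ln_cont; lra.
Qed.

Lemma g_small t : 0 < t -> exists a, 0 < a < 1/2 /\ g a < t.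
Proof.
move=> ht.
set K := 8 / t + 1.
have hK8 : 8 / t < K by rewrite /K; lra.
have h8t : 0 < 8 / t by apply: Rdiv_lt_0_compat; lra.
have hKpos : 1 < K by rewrite /K; lra.
have eK : 1 + K < exp K by apply: exp_ineq1; lra.
have eK2 : 1 + K/2 < exp (K/2) by apply: exp_ineq1; lra.
have eKsq : exp K = exp (K/2) * exp (K/2) by rewrite -exp_plus; f_equal; field.
set a := / exp K.
have ha0 : 0 < a by apply: Rinv_0_lt_compat; apply: exp_pos.
have ha1 : a < / (1 + K) by apply: Rinv_lt_contravar => //; apply: Rmult_lt_0_compat; lra.
have hinvK : / (1 + K) < / K by apply: Rinv_lt_contravar; nra.
have ha_half : a < 1/2.
  have : / (1 + K) < / 2 by apply: Rinv_lt_contravar; lra.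
  lra.
have hKt : / K < t / 8.
  have : 8 < K * t.
    have := Rmult_lt_compat_r t _ _ ht hK8.
    have -> : 8 / t * t = 8 by field; lra.
    lra.
  move=> h; apply: (Rmult_lt_reg_l (8 * K)); first lra.
  have -> : 8 * K * / K = 8 by field; lra.
  have -> : 8 * K * (t / 8) = K * t by field.
  lra.
have lna : ln a = - K by rewrite /a ln_Rinv; [rewrite ln_exp | apply: exp_pos].
have hKa : K * a < 4 / K.
  have e2pos : 0 < exp (K/2) := exp_pos _.
  have : K * K < 4 * exp K.
    rewrite eKsq; nra.
  move=> h.
  have eKpos : 0 < exp K := exp_pos _.
  rewrite /a.
  apply: (Rmult_lt_reg_l (K * exp K)); first nra.
  have -> : K * exp K * (K * / exp K) = K * K by field; lra.
  have -> : K * exp K * (4 / K) = 4 * exp K by field; lra.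
  lra.
have hl : - ((1 - a) * ln (1 - a)) < a.
  set u := / (1 - a).
  have hu : 1 < u.
    rewrite /u -Rinv_1; apply: Rinv_lt_contravar; lra.
  have hlu : ln u < u - 1.
    have h := exp_ineq1 (u - 1) ltac:(lra).
    have := ln_increasing u (exp (u - 1)) ltac:(lra) ltac:(lra).
    by rewrite ln_exp.
  have h1a : 1 - a = / u by rewrite /u Rinv_inv.
  have hl1 : ln (1 - a) = - ln u by rewrite h1a ln_Rinv; lra.
  rewrite hl1.
  have : (1 - a) * ln u < (1 - a) * (u - 1) by apply: Rmult_lt_compat_l; lra.
  have -> : (1 - a) * (u - 1) = a.
    rewrite /u; field; lra.
  lra.
exists a; split; first lra.
rewrite /g lna.
have : 4 / K < t / 2.
  have -> : 4 / K = 4 * / K by [].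
  lra.
lra.
Qed.

Lemma exists_root t : 0 < t < ln 2 -> exists p, 0 < p <= 1/2 /\ g p = t.
Proof.
move=> ht.
have [a [ha hga]] := @g_small t (proj1 ht).
have hc : forall x, a <= x <= 1/2 -> continuity_pt (fun p => g p - t) x.
  move=> x hx.
  change (continuity_pt (g - fct_cte t)%F x).
  apply: continuity_pt_minus; first by apply: g_cont; lra.
  by apply: continuity_pt_const; move=> ? ?.
have h12 : 0 < g (1/2) - t by rewrite g_half; lra.
have [z [hz hz0]] := @Ranalysis5.IVT_interv (fun p => g p - t) a (1/2) hc ltac:(lra) ltac:(lra) h12.
exists z; split; lra.
Qed.

Lemma h2inv_spec y : 0 < y < 1 -> 0 < h2inv y <= 1/2 /\ h2 (h2inv y) = y.
Proof.
move=> hy.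
have l2 := ln2_pos.
have [p [hp hgp]] := @exists_root (y * ln 2) ltac:(nra).
have ex : exists p, 0 <= p <= 1/2 /\ h2 p = y.
  exists p; split; first lra.
  apply: (Rmult_eq_reg_r (ln 2)); last lra.
  rewrite h2_g ?hgp //; lra.
have [h1 h2e] := epsilon_spec (inhabits 0) (fun p => 0 <= p <= 1/2 /\ h2 p = y) ex.
rewrite /h2inv; split => //.
split; last lra.
case: (Rle_lt_or_eq_dec _ _ (proj1 h1)) => // h0.
by move: h2e; rewrite -h0 h2_0; lra.
Qed.

Theorem proposition2 (alpha : R) (N M Gamma Delta : nat) (U : 'I_M -> {set 'I_N}) :
  0 < alpha -> alpha < 1 ->
  (1 <= N)%nat ->
  INR M > 1 + INR N / alpha ->
  (Delta < Gamma)%nat -> (Gamma < N)%nat ->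
  set_system Gamma Delta U ->
  INR Delta / INR Gamma >= (1 - alpha) * h2inv (log2 (INR M) / INR N).
Proof.
move=> ha0 ha1 hN hM hDG hGN hs.
have hb := @count_bound _ _ _ _ _ hs.
have hMb := @M_le_bin _ _ _ _ _ hs.
have hG0 : (0 < Gamma)%N by lia.
have hMlt := @bin_lt N Gamma hG0.
have l2 := ln2_pos.
have nN : 1 <= INR N by apply: (le_INR 1); apply/leP.
have NA : 0 < INR N / alpha by apply: Rdiv_lt_0_compat; lra.
have mM : 1 < INR M by lra.
have M1 : (1 < M)%N by apply/ltP; apply: INR_lt; simpl; lra.
have nG : 1 <= INR Gamma by apply: (le_INR 1); apply/leP.
have nD : 0 <= INR Delta by apply: pos_INR.
have hbR : INR M * (INR Gamma * INR Gamma) <= INR N * (INR Gamma + (INR M - 1) * INR Delta).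
  have hM1 : INR (M - 1) = INR M - 1 by rewrite -minusE minus_INR; [simpl; lra | apply/leP; lia].
  rewrite -hM1 -!mult_INR -plus_INR -mult_INR; apply: le_INR; apply/leP.
  by move: hb; rewrite expnS expn1.
have hMC : INR M <= C N Gamma by rewrite -binC ?(ltnW hGN) //; apply: le_INR; apply/leP.
have hM2 : INR M < 2 ^ N.
  have e : forall n, (2 ^ n)%N = Nat.pow 2 n by elim=> [//|n IH]; rewrite expnS IH.
  have := lt_INR M (2 ^ N)%N ltac:(apply/ltP; exact: leq_ltn_trans hMb hMlt).
  rewrite e pow_INR; simpl (INR 2); replace (1 + 1) with 2 by ring; done.
have lM0 : 0 < ln (INR M) by have := ln_increasing 1 (INR M) ltac:(lra) mM; rewrite ln_1.
have lM1 : ln (INR M) < INR N * ln 2.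
  have := ln_increasing (INR M) (2 ^ N) ltac:(lra) hM2; rewrite ln_pow //; lra.
set y := log2 (INR M) / INR N.
have ye : y * ln 2 = ln (INR M) / INR N by rewrite /y /log2; field; lra.
have hy : 0 < y < 1.
  have : 0 < ln (INR M) / INR N by apply: Rdiv_lt_0_compat; lra.
  have : ln (INR M) / INR N < ln 2.
    apply: (Rmult_lt_reg_r (INR N)); first lra.
    have -> : ln (INR M) / INR N * INR N = ln (INR M) by field; lra.
    lra.
  move=> h1 h2; split; nra.
have [[hp0 hp1] hp] := @h2inv_spec y hy.
set p := h2inv y in hp0 hp1 hp *.
have gp : g p * INR N = ln (INR M).
  rewrite -h2_g; last lra.
  rewrite hp ye; field; lra.
have hGN' : (Gamma <= N)%N by exact: ltnW.
have hlb := @ln_bound M N Gamma p ltac:(lra) hGN' ltac:(lia) hMC.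
have hNG : INR (N - Gamma) = INR N - INR Gamma.
  by rewrite -minusE minus_INR //; apply/leP.
rewrite hNG in hlb.
have hp2 : p < 1/2.
  case: (Rle_lt_or_eq_dec _ _ hp1) => // he.
  move: gp; rewrite he g_half; lra.
have lpq : ln p < ln (1 - p) by apply: ln_increasing; lra.
have hpG : p * INR N <= INR Gamma.
  move: gp hlb; rewrite /g => gp hlb.
  nra.
have hMa : INR N < alpha * (INR M - 1).
  have : INR N / alpha < INR M - 1 by lra.
  move=> h; have := Rmult_lt_compat_l alpha _ _ ha0 h.
  have -> : alpha * (INR N / alpha) = INR N by field; lra.
  lra.
have k1 : INR N <= INR Gamma * (1 + alpha * (INR M - 1)) by nra.
have k2 : INR M * (INR Gamma * INR Gamma) - INR N * INR Gamma >=
          (1 - alpha) * (INR M - 1) * (INR Gamma * INR Gamma) by nra.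
have k3 : (INR M - 1) * (INR N * INR Delta - (1 - alpha) * (INR Gamma * INR Gamma)) >= 0 by nra.
have k4 : INR N * INR Delta >= (1 - alpha) * (INR Gamma * INR Gamma).
  have : 0 < INR M - 1 by lra.
  nra.
have k5 : (1 - alpha) * p * INR Gamma <= INR Delta.
  have : (1 - alpha) * p * INR Gamma * INR N <= INR Delta * INR N.
    have hq : 0 <= (1 - alpha) * INR Gamma by nra.
    have := Rmult_le_compat_l _ _ _ hq hpG.
    nra.
  move=> h; apply: (Rmult_le_reg_r (INR N)); lra.
apply: Rle_ge.
apply: (Rmult_le_reg_r (INR Gamma)); first lra.
have -> : INR Delta / INR Gamma * INR Gamma = INR Delta by field; lra.
lra.
Qed.
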